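(* Let $\mathbb{G}$ be a homogeneous group of homogeneous dimension $Q\geq 3$ and let $|\cdot|$ be any homogeneous quasi-norm on $\mathbb{G}$. Then for every complex-valued $f\in C_0^\infty(\mathbb{G}\setminus\{0\})$ and every $\alpha\in\mathbb{R}$, $$\left\|\frac{1}{|x|^{\alpha}}\mathcal{R} f\right\|^{2}_{L^{2}(\mathbb{G})}-\left(\frac{Q-2}{2}-\alpha\right)^{2}\left\|\frac{f}{|x|^{\alpha+1}}\right\|^{2}_{L^{2}(\mathbb{G})}=\left\|\frac{1}{|x|^{\alpha}}\mathcal{R} f+\frac{Q-2-2\alpha}{2|x|^{\alpha+1}}f\right\|^{2}_{L^{2}(\mathbb{G})}.$$
   Context: A homogeneous group $\mathbb{G}$ is a Lie group whose underlying manifold is $\mathbb{R}^n$, equipped with dilations $D_\lambda(x)=(\lambda^{\nu_1}x_1,\dots,\lambda^{\nu_n}x_n)$, $\nu_1,\dots,\nu_n>0$, such that each $D_\lambda$ ($\lambda>0$) is a group automorphism. Its homogeneous dimension is $Q=\nu_1+\dots+\nu_n$. The Haar measure $dx$ on $\mathbb{G}$ is Lebesgue measure on $\mathbb{R}^n$, and $L^2(\mathbb{G})$ is taken with respect to it. A homogeneous quasi-norm is a continuous function $x\mapsto|x|\in[0,\infty)$ with $|x^{-1}|=|x|$, $|D_\lambda x|=\lambda|x|$ for all $\lambda>0$, and $|x|=0$ iff $x=0$ (here $0$ is the identity). The radial derivative $\mathcal{R}$ is defined for $x\neq 0$ by $\mathcal{R}f(x)=\frac{d}{dr}\big[f(D_r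 y)\big]\big|_{r=|x|}$, where $y=D_{1/|x|}x$ lies on the unit quasi-sphere $\{|y|=1\}$; i.e. $\mathcal{R}=\frac{d}{d|x|}$ is differentiation along the dilation orbits with respect to $r=|x|$. *)

(* Defs.v *)
From Stdlib Require Import Reals.
From mathcomp Require Import ssreflect ssrfun ssrbool eqtype ssrnat fintype bigop.
Open Scope R_scope.

Definition vec (m : nat) := 'I_m -> R.

Definition vzero (m : nat) : vec m := fun _ => 0.

Definition upd {m : nat} (x : vec m) (i : 'I_m) (t : R) : vec m :=
  fun j => if j == i then t else x j.

Definition updn {m : nat} (x : vec m) (k : nat) (t : R) : vec m :=
  fun j => if (nat_of_ord j == k)%N then t else x j.

Definition cont_vec {m : nat} (g : vec m -> R) : Prop :=
  forall (x : vec m) (eps : R), 0 < eps -> exists delta, 0 < delta /\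
    forall y : vec m, (forall i, Rabs (y i - x i) < delta) -> Rabs (g y - g x) < eps.

Fixpoint Ck (m k : nat) (g : vec m -> R) : Prop :=
  match k with
  | O => cont_vec g
  | S k' => cont_vec g /\
      forall i : 'I_m, exists g' : vec m -> R,
        (forall x, derivable_pt_lim (fun t => g (upd x i t)) (x i) (g' x)) /\
        Ck m k' g'
  end.

Definition smooth {m : nat} (g : vec m -> R) : Prop := forall k, Ck m k g.

Definition smooth_map {m p : nat} (F : vec m -> vec p) : Prop :=
  forall i : 'I_p, smooth (fun x => F x i).

(* the pair (x,y) of R^n x R^n as a point of R^(n+n) *)
Definition vfst {n : nat} (z : vec (n + n)) : vec n := fun j => z (lshift n j).
Definition vsnd {n : nat} (z : vec (n + n)) : vec n := fun j => z (rshift n j).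

(* improper Riemann integral over R (symmetric exhaustion) *)
Definition ImproperInt (h : R -> R) (I : R) : Prop :=
  (forall a b, inhabited (Riemann_integrable h a b)) /\
  forall eps, 0 < eps -> exists M0, forall M (pr : Riemann_integrable h (- M) M),
    M0 < M -> Rabs (RiemannInt pr - I) < eps.

(* iterated integral over the first k coordinates, the others fixed by x *)
Fixpoint IntIter (n k : nat) (g : vec n -> R) (x : vec n) (I : R) : Prop :=
  match k with
  | O => I = g x
  | S k' => exists h : R -> R,
      (forall t, IntIter n k' g (updn x k' t) (h t)) /\ ImproperInt h I
  end.

(* "the Lebesgue integral of g over R^n equals I" (for the continuous compactly
   supported integrands used here, iterated integrals compute it) *)
Definition LebInt (n : nat) (g : vec n -> R) (I : R) : Prop :=
  IntIter n n g (vzero n) I.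

Definition dil {n : nat} (nu : 'I_n -> R) (lam : R) (x : vec n) : vec n :=
  fun i => Rpower lam (nu i) * x i.

Definition homdim {n : nat} (nu : 'I_n -> R) : R := \big[Rplus/0]_(i < n) nu i.

Definition homogeneous_group {n : nat} (mul : vec n -> vec n -> vec n)
  (inv : vec n -> vec n) (nu : 'I_n -> R) : Prop :=
  (forall x y z, mul (mul x y) z = mul x (mul y z)) /\
  (forall x, mul x (vzero n) = x /\ mul (vzero n) x = x) /\
  (forall x, mul x (inv x) = vzero n /\ mul (inv x) x = vzero n) /\
  smooth_map (fun z : vec (n + n) => mul (vfst z) (vsnd z)) /\
  smooth_map inv /\
  (forall i, 0 < nu i) /\
  (forall lam x y, 0 < lam -> dil nu lam (mul x y) = mul (dil nu lam x) (dil nu lam y)).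

Definition hom_quasi_norm {n : nat} (inv : vec n -> vec n) (nu : 'I_n -> R)
  (N : vec n -> R) : Prop :=
  cont_vec N /\
  (forall x, 0 <= N x) /\
  (forall x, N (inv x) = N x) /\
  (forall lam x, 0 < lam -> N (dil nu lam x) = lam * N x) /\
  (forall x, N x = 0 <-> x = vzero n).

(* f in C_0^infty(G \ {0}) (real-valued component): smooth, vanishing outside a
   bounded set and in a neighbourhood of 0 *)
Definition Cc_infty_punctured {n : nat} (f : vec n -> R) : Prop :=
  smooth f /\ exists Rb r, 0 < r /\ 0 < Rb /\
    forall x, ((exists i, Rb < Rabs (x i)) \/ (forall i, Rabs (x i) < r)) -> f x = 0.

(* Rf is the radial derivative of f: for x <> 0,
   Rf x = d/dr [f (D_r y)] at r = |x|, with y = D_{1/|x|} x.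
   Convention: Rf 0 = 0 (f vanishes near 0). *)
Definition radial_deriv {n : nat} (nu : 'I_n -> R) (N : vec n -> R)
  (f Rf : vec n -> R) : Prop :=
  Rf (vzero n) = 0 /\
  forall x, x <> vzero n ->
    derivable_pt_lim (fun r => f (dil nu r (dil nu (/ N x) x))) (N x) (Rf x).

(* Main.v *)
Require Import Defs.
From Stdlib Require Import Reals Lra Lia FunctionalExtensionality ClassicalEpsilon Classical.
From Coquelicot Require Import Coquelicot.
From HB Require Import structures.
From mathcomp Require Import ssreflect ssrfun ssrbool eqtype ssrnat fintype bigop seq.
Open Scope R_scope.



Lemma eq_of_small (a b : R) : (forall eps, 0 < eps -> Rabs (a - b) < eps) -> a = b.
Proof.
move=> H. destruct (Req_dec a b) as [e|ne]; first done.
have hp : 0 < Rabs (a - b) by apply: Rabs_pos_lt; lra.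
have := H _ hp. lra.
Qed.

Lemma RInt_lin (f g : R -> R) a b c d : ex_RInt f a b -> ex_RInt g a b ->
  RInt (fun t => c * f t + d * g t) a b = c * RInt f a b + d * RInt g a b.
Proof.
move=> Hf Hg.
have := RInt_plus (fun t => scal c (f t)) (fun t => scal d (g t)) a b
  (ex_RInt_scal _ _ _ _ Hf) (ex_RInt_scal _ _ _ _ Hg).
rewrite (RInt_scal _ _ _ _ Hf) (RInt_scal _ _ _ _ Hg). by [].
Qed.

Lemma ex_RInt_lin (f g : R -> R) a b c d : ex_RInt f a b -> ex_RInt g a b ->
  ex_RInt (fun t => c * f t + d * g t) a b.
Proof.
move=> Hf Hg.
exact: (ex_RInt_plus (fun t => scal c (f t)) (fun t => scal d (g t)) a b
  (ex_RInt_scal _ _ _ _ Hf) (ex_RInt_scal _ _ _ _ Hg)).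
Qed.

Lemma ImproperInt_iff h I : ImproperInt h I <-> (forall a b, ex_RInt h a b) /\
  (forall eps, 0 < eps -> exists M0, forall M, M0 < M -> Rabs (RInt h (-M) M - I) < eps).
Proof.
split.
- move=> [Hi Hl]; split.
  + move=> a b; case: (Hi a b) => pr; exact: ex_RInt_Reals_1 pr.
  + move=> eps Heps; case: (Hl eps Heps) => M0 HM0; exists M0 => M HM.
    case: (Hi (-M) M) => pr. rewrite (RInt_Reals _ _ _ pr). exact: HM0.
- move=> [Hi Hl]; split.
  + move=> a b; constructor; exact: ex_RInt_Reals_0.
  + move=> eps Heps; case: (Hl eps Heps) => M0 HM0; exists M0 => M pr HM.
    rewrite -(RInt_Reals _ _ _ pr). exact: HM0.
Qed.

Lemma ImproperInt_lin h1 h2 I1 I2 c d : ImproperInt h1 I1 -> ImproperInt h2 I2 ->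
  ImproperInt (fun t => c * h1 t + d * h2 t) (c * I1 + d * I2).
Proof.
move=> /ImproperInt_iff [E1 L1] /ImproperInt_iff [E2 L2]; apply/ImproperInt_iff; split.
  by move=> a b; apply: ex_RInt_lin.
move=> eps Heps.
set K := Rabs c + Rabs d + 1.
have HK : 0 < K by rewrite /K; have := Rabs_pos c; have := Rabs_pos d; lra.
have He : 0 < eps / K by apply: Rdiv_lt_0_compat.
case: (L1 _ He) => M1 H1; case: (L2 _ He) => M2 H2.
exists (Rmax M1 M2) => M HM.
rewrite RInt_lin //.
have hh1 := H1 M (Rle_lt_trans _ _ _ (Rmax_l _ _) HM).
have hh2 := H2 M (Rle_lt_trans _ _ _ (Rmax_r _ _) HM).
have -> : c * RInt h1 (- M) M + d * RInt h2 (- M) M - (c * I1 + d * I2)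
  = c * (RInt h1 (- M) M - I1) + d * (RInt h2 (- M) M - I2) by ring.
apply: (Rle_lt_trans _ _ _ (Rabs_triang _ _)).
rewrite !Rabs_mult.
have : Rabs c * Rabs (RInt h1 (- M) M - I1) <= Rabs c * (eps / K).
  apply: Rmult_le_compat_l; [exact: Rabs_pos | lra].
have : Rabs d * Rabs (RInt h2 (- M) M - I2) <= Rabs d * (eps / K).
  apply: Rmult_le_compat_l; [exact: Rabs_pos | lra].
have : (Rabs c + Rabs d) * (eps / K) < eps.
  have e : eps / K * K = eps by field; apply: Rgt_not_eq.
  have -> : Rabs c + Rabs d = K - 1 by rewrite /K; ring.
  nra.
nra.
Qed.

Lemma ImproperInt_unique h I J : ImproperInt h I -> ImproperInt h J -> I = J.
Proof.
move=> /ImproperInt_iff [_ L1] /ImproperInt_iff [_ L2].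
apply: eq_of_small => eps Heps.
have He : 0 < eps / 2 by lra.
case: (L1 _ He) => M1 H1; case: (L2 _ He) => M2 H2.
set M := Rmax M1 M2 + 1.
have hM : Rmax M1 M2 < M by rewrite /M; lra.
have h1 := H1 M (Rle_lt_trans _ _ _ (Rmax_l M1 M2) hM).
have h2 := H2 M (Rle_lt_trans _ _ _ (Rmax_r M1 M2) hM).
have -> : I - J = - (RInt h (- M) M - I) + (RInt h (- M) M - J) by ring.
apply: (Rle_lt_trans _ _ _ (Rabs_triang _ _)). rewrite Rabs_Ropp. lra.
Qed.

Lemma ImproperInt_ext h h' I : (forall t, h t = h' t) -> ImproperInt h I -> ImproperInt h' I.
Proof.
move=> E; have -> : h' = h by apply: functional_extensionality => t; rewrite E.
done.
Qed.

Lemma ImproperInt_scale h I a : 0 < a -> ImproperInt h I ->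
  ImproperInt (fun t => h (a * t)) (I / a).
Proof.
move=> Ha /ImproperInt_iff [E L]; apply/ImproperInt_iff.
have key : forall x y, ex_RInt (fun t => h (a * t)) x y /\
   RInt (fun t => h (a * t)) x y = / a * RInt h (a * x + 0) (a * y + 0).
  move=> x y.
  have e1 := ex_RInt_comp_lin h a 0 x y (E _ _).
  have e2 := ex_RInt_scal _ x y (/ a) e1.
  have ext : forall t, scal (/ a) (scal a (h (a * t + 0))) = h (a * t).
    move=> t; rewrite /scal /= /mult /= Rplus_0_r; field; lra.
  split.
    exact: (ex_RInt_ext _ _ x y (fun t _ => ext t) e2).
  rewrite -(RInt_comp_lin h a 0 x y (E _ _)).
  rewrite -(RInt_ext _ _ x y (fun t _ => ext t)).
  by rewrite (RInt_scal _ _ _ _ e1).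
split; first by move=> x y; case: (key x y).
move=> eps Heps.
have He : 0 < eps * a by nra.
case: (L _ He) => M0 H0.
exists (M0 / a) => M HM.
case: (key (-M) M) => _ ->.
have -> : a * - M + 0 = - (a * M) by ring.
have -> : a * M + 0 = a * M by ring.
have HaM : M0 < a * M.
  have : M0 / a * a < M * a by apply: Rmult_lt_compat_r.
  have -> : M0 / a * a = M0 by field; lra.
  lra.
have := H0 _ HaM.
have -> : / a * RInt h (- (a * M)) (a * M) - I / a = / a * (RInt h (- (a * M)) (a * M) - I)
  by field; lra.
rewrite Rabs_mult (Rabs_pos_eq (/ a)); last by apply: Rlt_le; apply: Rinv_0_lt_compat.
move=> Hlt.
apply: (Rmult_lt_reg_l a); first lra.
rewrite -Rmult_assoc Rinv_r; last lra.
lra.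
Qed.

Lemma RInt_zero_fun (f : R -> R) a b : (forall t, f t = 0) -> RInt f a b = 0.
Proof.
move=> H. rewrite (RInt_ext f (fun _ => 0)); last by move=> x _; rewrite H.
rewrite RInt_const /scal /= /mult /=; ring.
Qed.

Lemma ImproperInt_compact h B : 0 < B -> (forall a b, ex_RInt h a b) ->
  (forall t, B < Rabs t -> h t = 0) -> ImproperInt h (RInt h (- B) B).
Proof.
move=> HB E Z; apply/ImproperInt_iff; split=> // eps Heps.
exists B => M HM.
have -> : RInt h (-M) M = RInt h (-B) B.
  rewrite -(RInt_Chasles h (-M) (-B) M) // -(RInt_Chasles h (-B) B M) //.
  rewrite (RInt_ext h (fun _ => 0) (-M) (-B)); last first.
    move=> x; rewrite Rmin_left ?Rmax_right; try lra.
    move=> hx; apply: Z; rewrite Rabs_left; lra.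
  rewrite (RInt_ext h (fun _ => 0) B M); last first.
    move=> x; rewrite Rmin_left ?Rmax_right; try lra.
    move=> hx; apply: Z; rewrite Rabs_right; lra.
  rewrite !RInt_const /scal /= /mult /= /plus /=; ring.
rewrite Rminus_diag Rabs_R0; lra.
Qed.

Section IntIterLemmas.
Variable n : nat.

Lemma IntIter_ext k (g g' : vec n -> R) x I : (forall y, g y = g' y) ->
  IntIter n k g x I -> IntIter n k g' x I.
Proof.
move=> E; elim: k x I => [|k IH] x I /=; first by move=> ->.
case=> h [Hh Hi]; exists h; split=> // t; exact: IH.
Qed.

Lemma IntIter_lin k (g1 g2 : vec n -> R) c d x I1 I2 :
  IntIter n k g1 x I1 -> IntIter n k g2 x I2 ->
  IntIter n k (fun y => c * g1 y + d * g2 y) x (c * I1 + d * I2).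
Proof.
elim: k x I1 I2 => [|k IH] x I1 I2 /=; first by move=> -> ->.
case=> h1 [H1 E1] [h2 [H2 E2]].
exists (fun t => c * h1 t + d * h2 t); split.
  move=> t; exact: IH.
exact: ImproperInt_lin.
Qed.

Lemma IntIter_unique k (g : vec n -> R) x I J :
  IntIter n k g x I -> IntIter n k g x J -> I = J.
Proof.
elim: k x I J => [|k IH] x I J /=; first by move=> -> ->.
case=> h1 [H1 E1] [h2 [H2 E2]].
apply: (ImproperInt_unique h1) => //.
apply: (ImproperInt_ext h2) => // t; exact: (IH _ _ _ (H2 t) (H1 t)).
Qed.

End IntIterLemmas.

Lemma Rmult_assoc' : associative Rmult. Proof. move=> x y z; ring. Qed.
Lemma Rplus_assoc' : associative Rplus. Proof. move=> x y z; ring. Qed.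
HB.instance Definition _ := Monoid.isComLaw.Build R 1 Rmult Rmult_assoc' Rmult_comm Rmult_1_l.
HB.instance Definition _ := Monoid.isComLaw.Build R 0 Rplus Rplus_assoc' Rplus_comm Rplus_0_l.

Lemma big_step {T : Type} {idx : T} (op : Monoid.com_law idx) n (F : 'I_n -> T) (o : 'I_n) k :
  nat_of_ord o = k ->
  \big[op/idx]_(i < n | (i < k.+1)%N) F i = op (F o) (\big[op/idx]_(i < n | (i < k)%N) F i).
Proof.
move=> Ho. rewrite (bigD1 o) /=; last by rewrite Ho ltnS leqnn.
congr (op _ _); apply: eq_bigl => i.
rewrite ltnS -val_eqE /= Ho (ltn_neqAle i k) andbC //.
Qed.

Lemma transport_val (P : R -> Prop) a b : a = b -> P a -> P b.
Proof. by move=> ->. Qed.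

Definition sc {n} (c : 'I_n -> R) (x : vec n) : vec n := fun i => c i * x i.

Lemma big_Rmult_pos n (P : pred 'I_n) (c : 'I_n -> R) : (forall i, 0 < c i) ->
  0 < \big[Rmult/1]_(i < n | P i) c i.
Proof.
move=> H; apply: (big_ind (fun x => 0 < x)) => //; first lra.
move=> x y hx hy; exact: Rmult_lt_0_compat.
Qed.

Lemma IntIter_scale n (c : 'I_n -> R) (Hc : forall i, 0 < c i) (g : vec n -> R) :
  forall k, (k <= n)%N -> forall x I, IntIter n k g (sc c x) I ->
  IntIter n k (fun y => g (sc c y)) x (I / \big[Rmult/1]_(i < n | (i < k)%N) c i).
Proof.
elim=> [|k IH] Hk x I /=.
  rewrite big_pred0 // => ->; field.
case=> h [Hh Hi].
have Hkn : (k < n)%N := Hk.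
set o := Ordinal Hkn.
have HP := big_Rmult_pos n (fun i => (i < k)%N) c Hc.
exists (fun t => / (\big[Rmult/1]_(i < n | (i < k)%N) c i) * h (c o * t) + 0 * h (c o * t)).
split.
  move=> t.
  have e : sc c (updn x k t) = updn (sc c x) k (c o * t).
    apply: functional_extensionality => j; rewrite /sc /updn.
    case: eqP => [Ej|//]. have -> : j = o by apply: val_inj; rewrite /= Ej.
    done.
  have := IH (ltnW Hk) (updn x k t) (h (c o * t)).
  rewrite e => /(_ (Hh _)).
  apply: transport_val. rewrite /Rdiv; ring.
have := ImproperInt_lin _ _ _ _ (/ (\big[Rmult/1]_(i < n | (i < k)%N) c i)) 0
  (ImproperInt_scale h I (c o) (Hc o) Hi) (ImproperInt_scale h I (c o) (Hc o) Hi).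
apply: (transport_val (fun v => ImproperInt _ v)).
rewrite (big_step _ _ _ o) //=.
move: HP; set P := \big[Rmult/1]_(i < n | (i < k)%N) c i => HP.
have := Hc o => Hco. field; split; lra.
Qed.



Lemma cont_of_eps (f : R -> R) x : (forall eps, 0 < eps -> exists d, 0 < d /\
  forall y, Rabs (y - x) < d -> Rabs (f y - f x) < eps) -> continuous f x.
Proof.
move=> H. apply/continuity_pt_filterlim. apply/continuity_pt_locally => eps.
case: (H eps (cond_pos eps)) => d [Hd Hy]. exists (mkposreal d Hd) => y Hb. apply: Hy. exact Hb.
Qed.

Lemma unif_compact (a b : R) (Good : R -> R -> Prop) :
  (forall s d d', 0 < d' <= d -> Good s d -> Good s d') ->
  (forall t, a <= t <= b -> exists d, 0 < d /\ forall s, Rabs (s - t) < d -> Good s d) ->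
  exists d, 0 < d /\ forall s, a <= s <= b -> Good s d.
Proof.
move=> Mono Loc.
have H' : forall t, exists d, 0 < d /\ (a <= t <= b -> forall s, Rabs (s - t) < d -> Good s d).
  move=> t. case: (classic (a <= t <= b)) => ht.
    case: (Loc t ht) => d [Hd Hs]; exists d; split=> //.
  exists 1; split; [lra | by move=> /ht].
pose dl (t : R) := proj1_sig (constructive_indefinite_description _ (H' t)).
have dlP : forall t, 0 < dl t /\ (a <= t <= b -> forall s, Rabs (s - t) < dl t -> Good s (dl t)).
  move=> t; exact: (proj2_sig (constructive_indefinite_description _ (H' t))).
pose delta (t : R) := mkposreal (dl t) (proj1 (dlP t)).
case: (compactness_value_1d a b delta) => d Hd.
exists d; split; first exact: cond_pos.
move=> s hs. apply: NNPP => NG. apply: (Hd s hs) => -[t [ht [hst hdt]]].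
apply: NG. apply: (Mono s (dl t)).
  split; [exact: cond_pos | exact hdt].
apply: (proj2 (dlP t)) => //.
Qed.

Definition jcont {n} (G : R -> vec n -> R) := forall l x eps, 0 < eps -> exists d, 0 < d /\
  forall l' y, Rabs (l' - l) < d -> (forall i, Rabs (y i - x i) < d) -> Rabs (G l' y - G l x) < eps.

Definition supp_from {n} (G : R -> vec n -> R) (k : nat) (B : R) :=
  forall l x, (exists i : 'I_n, (k <= i)%N /\ B < Rabs (x i)) -> G l x = 0.

Lemma updn_at {n} (x : vec n) k t (o : 'I_n) : nat_of_ord o = k -> updn x k t o = t.
Proof. by move=> Ho; rewrite /updn Ho eqxx. Qed.

Lemma updn_other {n} (x : vec n) k t (i : 'I_n) : nat_of_ord i <> k -> updn x k t i = x i.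
Proof. by move=> Hi; rewrite /updn; case: eqP. Qed.

Lemma exist_iter n (G : R -> vec n -> R) B : 0 < B -> jcont G -> supp_from G 0 B ->
  forall k, (k <= n)%N -> exists F, jcont F /\ supp_from F k B /\
    forall l x, IntIter n k (G l) x (F l x).
Proof.
move=> HB HG HS. elim=> [|k IH] Hk.
  exists G; split=> //; split=> // l x /=; done.
have Hkn : (k < n)%N := Hk.
set o := Ordinal Hkn.
have Ho : nat_of_ord o = k by [].
case: (IH (ltnW Hk)) => F [FC [FS FI]].
have Fline : forall l x t, continuous (fun t => F l (updn x k t)) t.
  move=> l x t; apply: cont_of_eps => eps Heps.
  case: (FC l (updn x k t) eps Heps) => d [Hd Hy].
  exists d; split=> // t' ht'. apply: Hy; first by rewrite Rminus_diag Rabs_R0.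
  move=> i. case: (eqVneq (nat_of_ord i) k) => [Ei|Ni].
    by rewrite !(updn_at _ _ _ i Ei).
  rewrite !(updn_other _ _ _ i) //; try (by move/eqP: Ni).
  rewrite Rminus_diag Rabs_R0; lra.
have Fex : forall l x a b, ex_RInt (fun t => F l (updn x k t)) a b.
  move=> l x a b; apply: ex_RInt_continuous => z _; exact: Fline.
have Fzero : forall l x t, B < Rabs t -> F l (updn x k t) = 0.
  move=> l x t ht; apply: FS; exists o; split; first by rewrite Ho.
  by rewrite updn_at.
exists (fun l x => RInt (fun t => F l (updn x k t)) (- B) B).
split; last split.
-
  move=> l x eps Heps.
  set e2 := eps / (4 * B + 1).
  have He2 : 0 < e2 by apply: Rdiv_lt_0_compat; lra.
  have He2' : 0 < e2 / 2 by lra.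
  case: (unif_compact (- B) B (fun s d => forall l' y, Rabs (l' - l) < d ->
      (forall i, Rabs (y i - x i) < d) -> Rabs (F l' (updn y k s) - F l (updn x k s)) < e2)).
  + move=> s d d' hd Hg l' y hl hy. apply: Hg; first lra.
    move=> i; have := hy i; lra.
  + move=> t _. case: (FC l (updn x k t) _ He2') => d [Hd Hy].
    exists d; split=> // s hs l' y hl hy.
    have close : forall l'' (y' : vec n), Rabs (l'' - l) < d -> (forall i, Rabs (y' i - x i) < d) ->
        Rabs (F l'' (updn y' k s) - F l (updn x k t)) < e2 / 2.
      move=> l'' y' h1 h2; apply: Hy => // i.
      case: (eqVneq (nat_of_ord i) k) => [Ei|Ni].
        by rewrite !(updn_at _ _ _ i Ei).
      rewrite !(updn_other _ _ _ i) //; by move/eqP: Ni.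
    have c1 := close l' y hl hy.
    have c2 := close l x ltac:(rewrite Rminus_diag Rabs_R0; lra)
       ltac:(move=> i; rewrite Rminus_diag Rabs_R0; lra).
    have -> : F l' (updn y k s) - F l (updn x k s) =
      (F l' (updn y k s) - F l (updn x k t)) - (F l (updn x k s) - F l (updn x k t)) by ring.
    apply: (Rle_lt_trans _ _ _ (Rabs_triang _ _)). rewrite Rabs_Ropp. lra.
  + move=> d [Hd Hu]. exists d; split=> // l' y hl hy.
    have := RInt_lin (fun t => F l' (updn y k t)) (fun t => F l (updn x k t)) (- B) B 1 (-1)
      (Fex _ _ _ _) (Fex _ _ _ _).
    have -> : 1 * RInt (fun t : R => F l' (updn y k t)) (- B) B +
      -1 * RInt (fun t : R => F l (updn x k t)) (- B) B =
      RInt (fun t : R => F l' (updn y k t)) (- B) B - RInt (fun t : R => F l (updn x k t)) (- B) B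
      by ring.
    move=> <-.
    have := abs_RInt_le_const (fun t => 1 * F l' (updn y k t) + -1 * F l (updn x k t)) (- B) B e2
      ltac:(lra) (ex_RInt_lin _ _ _ _ _ _ (Fex _ _ _ _) (Fex _ _ _ _)).
    move=> /(_ _) H. apply: (Rle_lt_trans _ _ _ (H _)).
      move=> t ht. have := Hu t ht l' y hl hy.
      have -> : 1 * F l' (updn y k t) + -1 * F l (updn x k t) = F l' (updn y k t) - F l (updn x k t) by ring.
      lra.
    have -> : (B - - B) * e2 = eps * (2 * B / (4 * B + 1)) by rewrite /e2; field; lra.
    have : 2 * B / (4 * B + 1) < 1.
      apply/(Rmult_lt_reg_r (4 * B + 1)); first lra.
      rewrite /Rdiv Rmult_assoc Rinv_l; lra.
    nra.
-
  move=> l x [i [hi hx]]. apply: RInt_zero_fun => t.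
  apply: FS. exists i; split; first exact: ltnW.
  rewrite updn_other //. move=> E; move: hi; rewrite E ltnn //.
- move=> l x /=. exists (fun t => F l (updn x k t)); split.
    move=> t; exact: FI.
  apply: ImproperInt_compact => //. exact: Fzero.
Qed.

Lemma exist_LebInt n (G : R -> vec n -> R) B : 0 < B -> jcont G -> supp_from G 0 B ->
  exists F : R -> R, (forall l eps, 0 < eps -> exists d, 0 < d /\ forall l', Rabs (l' - l) < d ->
     Rabs (F l' - F l) < eps) /\ forall l, LebInt n (G l) (F l).
Proof.
move=> HB HG HS. case: (exist_iter n G B HB HG HS n (leqnn n)) => F [FC [_ FI]].
exists (fun l => F l (vzero n)); split; last by move=> l; exact: FI.
move=> l eps He; case: (FC l (vzero n) eps He) => d [Hd H]; exists d; split=> // l' hl.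
apply: H => // i; rewrite Rminus_diag Rabs_R0; lra.
Qed.



Definition contp {n} (f : vec n -> R) (x : vec n) := forall eps, 0 < eps -> exists d, 0 < d /\
  forall y, (forall i, Rabs (y i - x i) < d) -> Rabs (f y - f x) < eps.

Lemma fin_delta n (P : 'I_n -> R -> Prop) : (forall i d d', 0 < d' <= d -> P i d -> P i d') ->
  (forall i, exists d, 0 < d /\ P i d) -> exists d, 0 < d /\ forall i, P i d.
Proof.
move=> Mono H.
suff : forall s : seq 'I_n, exists d, 0 < d /\ forall i, i \in s -> P i d.
  case/(_ (enum 'I_n)) => d [Hd Hs]; exists d; split=> // i; apply: Hs; by rewrite mem_enum.
elim=> [|a s [d [Hd Hs]]]; first by exists 1; split=> //; lra.
case: (H a) => da [Hda Pa].
exists (Rmin d da); split; first by apply: Rmin_pos.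
move=> i; rewrite in_cons => /orP [/eqP ->|Hi].
  apply: (Mono a da) => //; split; [by apply: Rmin_pos | exact: Rmin_r].
apply: (Mono i d); last exact: Hs.
split; [by apply: Rmin_pos | exact: Rmin_l].
Qed.

Lemma upd_at {n} (x : vec n) i t : upd x i t i = t.
Proof. by rewrite /upd eqxx. Qed.
Lemma upd_other {n} (x : vec n) i j t : j != i -> upd x i t j = x j.
Proof. by rewrite /upd => /negbTE ->. Qed.
Lemma upd_upd {n} (x : vec n) i t s : upd (upd x i t) i s = upd x i s.
Proof. apply: functional_extensionality => j; rewrite /upd; by case: eqP. Qed.
Lemma upd_same {n} (x : vec n) i : upd x i (x i) = x.
Proof. apply: functional_extensionality => j; rewrite /upd; case: eqP => // ->; done. Qed.

Lemma mvt_any (F F' : R -> R) a b : (forall t, derivable_pt_lim F t (F' t)) ->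
  exists c, F b - F a = F' c * (b - a) /\ Rabs (c - a) <= Rabs (b - a).
Proof.
move=> H. case: (Rtotal_order a b) => [lt|[eq|gt]].
- case: (MVT_cor2 F F' a b lt (fun c _ => H c)) => c [E hc].
  exists c; split=> //. rewrite !Rabs_right; lra.
- subst; exists b; split; [ring | rewrite Rminus_diag Rabs_R0; lra].
- case: (MVT_cor2 F F' b a gt (fun c _ => H c)) => c [E hc].
  exists c; split; first lra. rewrite !Rabs_left; lra.
Qed.

Definition partials {n} (f : vec n -> R) (df : 'I_n -> vec n -> R) :=
  forall i x, derivable_pt_lim (fun t => f (upd x i t)) (x i) (df i x).

Lemma line_deriv n (f : vec n -> R) df : partials f df ->
  forall W o t, derivable_pt_lim (fun s => f (upd W o s)) t (df o (upd W o t)).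
Proof.
move=> H W o t. have := H o (upd W o t). rewrite upd_at.
have -> : (fun s => f (upd (upd W o t) o s)) = (fun s => f (upd W o s)).
  apply: functional_extensionality => s; by rewrite upd_upd.
done.
Qed.

Lemma ratio n (f : vec n -> R) df (w : R -> vec n) (o : 'I_n) (c : R -> R) r0 dc :
  partials f df -> contp (df o) (upd (w r0) o (c r0)) ->
  (forall i, continuity_pt (fun r => w r i) r0) ->
  derivable_pt_lim c r0 dc ->
  derivable_pt_lim (fun r => f (upd (w r) o (c r)) - f (upd (w r) o (c r0))) r0
     (df o (upd (w r0) o (c r0)) * dc).
Proof.
move=> Hp Hc Hw Hdc.
set D := df o (upd (w r0) o (c r0)).
move=> eps Heps.
set e3 := eps / (2 * (Rabs dc + 1)).
set e2 := Rmin 1 (eps / (2 * (Rabs D + 1))).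
have Hdc1 : 0 < Rabs dc + 1 by have := Rabs_pos dc; lra.
have HD1 : 0 < Rabs D + 1 by have := Rabs_pos D; lra.
have He3 : 0 < e3 by apply: Rdiv_lt_0_compat; lra.
have He2 : 0 < e2 by apply: Rmin_pos; [lra | apply: Rdiv_lt_0_compat; lra].
case: (Hc e3 He3) => d1 [Hd1 Hcd].
case: (fin_delta n (fun i d => forall r, Rabs (r - r0) < d -> Rabs (w r i - w r0 i) < d1)).
  move=> i d d' hd H r hr; apply: H; lra.
  move=> i. have := Hw i. move=> /continuity_pt_locally /(_ (mkposreal d1 Hd1)) [dd Hdd].
  exists dd; split; first exact: cond_pos. move=> r hr; exact: (Hdd r hr).
move=> dw [Hdw Hw'].
have Hcc : continuity_pt c r0 by apply: derivable_continuous_pt; exists dc; exact Hdc.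
move: Hcc => /continuity_pt_locally /(_ (mkposreal d1 Hd1)) [dcc Hdcc].
case: (Hdc e2 He2) => dq Hdq.
have Hpos : 0 < Rmin (Rmin dw dcc) dq.
  apply: Rmin_pos; [apply: Rmin_pos; [lra | exact: cond_pos] | exact: cond_pos].
exists (mkposreal _ Hpos) => h hn hh. simpl in hh.
have hw : Rabs h < dw by have := Rmin_l (Rmin dw dcc) dq; have := Rmin_l dw dcc; lra.
have hc : Rabs h < dcc by have := Rmin_l (Rmin dw dcc) dq; have := Rmin_r dw dcc; lra.
have hq : Rabs h < dq by have := Rmin_r (Rmin dw dcc) dq; lra.
have Cq := Hdq h hn hq.
set W := w (r0 + h).
case: (mvt_any (fun s => f (upd W o s)) (fun s => df o (upd W o s)) (c r0) (c (r0 + h))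
   (line_deriv n f df Hp W o)) => xi [Exi Hxi].
rewrite Rminus_diag Rminus_0_r -/W Exi.
set q := (c (r0 + h) - c r0) / h.
have Cr : Rabs (c (r0 + h) - c r0) < d1.
  have := Hdcc (r0 + h). rewrite /ball /= /AbsRing_ball /abs /minus /plus /opp /=.
  have -> : r0 + h + - r0 = h by ring. move=> /(_ hc). done.
have Cpt : Rabs (df o (upd W o xi) - D) < e3.
  apply: Hcd => i. case: (eqVneq i o) => [->|Ni].
    rewrite !upd_at. lra.
  rewrite !upd_other //. apply: Hw'. have -> : r0 + h - r0 = h by ring. done.
have -> : df o (upd W o xi) * (c (r0 + h) - c r0) / h - D * dc =
   (df o (upd W o xi) - D) * q + D * (q - dc) by rewrite /q; field.
apply: (Rle_lt_trans _ _ _ (Rabs_triang _ _)). rewrite (Rabs_mult _ q) (Rabs_mult D).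
move: Cq; rewrite /e2 -/q => Cq.
have Hq : Rabs q <= Rabs dc + 1.
  have : Rabs (q - dc) < 1 by have := Rmin_l 1 (eps / (2 * (Rabs D + 1))); lra.
  have := Rabs_triang_inv q dc. lra.
have Hq2 : Rabs (q - dc) < eps / (2 * (Rabs D + 1)).
  have := Rmin_r 1 (eps / (2 * (Rabs D + 1))); lra.
have T1 : Rabs (df o (upd W o xi) - D) * Rabs q <= e3 * (Rabs dc + 1).
  apply: Rmult_le_compat; try exact: Rabs_pos; lra.
have T2 : Rabs D * Rabs (q - dc) <= Rabs D * (eps / (2 * (Rabs D + 1))).
  apply: Rmult_le_compat_l; [exact: Rabs_pos | lra].
have E3 : e3 * (Rabs dc + 1) = eps / 2 by rewrite /e3; field; lra.
have E2 : Rabs D * (eps / (2 * (Rabs D + 1))) < eps / 2.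
  apply: (Rmult_lt_reg_r (2 * (Rabs D + 1))); first lra.
  rewrite Rmult_assoc /Rdiv Rmult_assoc Rinv_l; last lra.
  have := Rabs_pos D; nra.
lra.
Qed.

Lemma dplus f1 f2 x l1 l2 : derivable_pt_lim f1 x l1 -> derivable_pt_lim f2 x l2 ->
  derivable_pt_lim (fun y => f1 y + f2 y) x (l1 + l2).
Proof. move=> H1 H2; exact: (derivable_pt_lim_plus f1 f2 x l1 l2 H1 H2). Qed.
Lemma dmult f1 f2 x l1 l2 : derivable_pt_lim f1 x l1 -> derivable_pt_lim f2 x l2 ->
  derivable_pt_lim (fun y => f1 y * f2 y) x (l1 * f2 x + f1 x * l2).
Proof. move=> H1 H2; exact: (derivable_pt_lim_mult f1 f2 x l1 l2 H1 H2). Qed.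
Lemma dext f g x l : (forall y, f y = g y) -> derivable_pt_lim f x l -> derivable_pt_lim g x l.
Proof. move=> E; have -> : g = f by apply: functional_extensionality => y; rewrite E. done. Qed.

Lemma chain n (f : vec n -> R) df (gam : R -> vec n) (dgam : 'I_n -> R) r0 :
  partials f df -> (forall i, contp (df i) (gam r0)) ->
  (forall i, derivable_pt_lim (fun r => gam r i) r0 (dgam i)) ->
  derivable_pt_lim (fun r => f (gam r)) r0 (\big[Rplus/0]_(i < n) (df i (gam r0) * dgam i)).
Proof.
move=> Hp Hc Hg.
pose z m r : vec n := fun j => if (j < m)%N then gam r j else gam r0 j.
have Hgc : forall i, continuity_pt (fun r => gam r i) r0.
  move=> i; apply: derivable_continuous_pt; exists (dgam i); exact: Hg.
have zr0 : forall m, z m r0 = gam r0.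
  move=> m; apply: functional_extensionality => j; rewrite /z; by case: ifP.
suff H : forall m, (m <= n)%N -> derivable_pt_lim (fun r => f (z m r)) r0
    (\big[Rplus/0]_(i < n | (i < m)%N) (df i (gam r0) * dgam i)).
  have := H n (leqnn n).
  rewrite (eq_bigl xpredT); last by move=> i; rewrite ltn_ord.
  apply: dext => r. congr f. apply: functional_extensionality => j; by rewrite /z ltn_ord.
elim=> [|m IH] Hm.
  rewrite big_pred0 //.
  apply: (dext (fun _ => f (gam r0))); last exact: derivable_pt_lim_const.
  move=> r; congr f; apply: functional_extensionality => j; by rewrite /z ltn0.
have Hmn : (m < n)%N := Hm.
set o := Ordinal Hmn.
have e1 : forall r, z m.+1 r = upd (z m r) o (gam r o).
  move=> r; apply: functional_extensionality => j.
  case: (eqVneq j o) => [->|Nj]; first by rewrite upd_at /z ltnS leqnn.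
  rewrite upd_other // /z ltnS leq_eqVlt.
  have -> : (nat_of_ord j == m) = false.
    apply/eqP => E; move: Nj; by rewrite -val_eqE /= E eqxx.
  done.
have e2 : forall r, z m r = upd (z m r) o (gam r0 o).
  move=> r; apply: functional_extensionality => j; rewrite /z /upd.
  case: eqP => [->|//]; by rewrite /= ltnn.
rewrite (big_step _ _ _ o) //.
apply: (dext (fun r => (f (upd (z m r) o (gam r o)) - f (upd (z m r) o (gam r0 o))) + f (z m r))).
  move=> r; rewrite -e1 -e2; ring.
apply: dplus; last exact: (IH (ltnW Hm)).
have := ratio n f df (z m) o (fun r => gam r o) r0 (dgam o) Hp.
rewrite -e2 zr0. apply => //.
move=> i; rewrite /z; case: (i < m)%N; [exact: Hgc | exact: continuity_pt_const].
Qed.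



Section ContP.
Variable n : nat.
Implicit Types f g : vec n -> R.

Lemma contp_const c x : contp (fun _ : vec n => c) x.
Proof. move=> eps He; exists 1; split; [lra|move=> y _; rewrite Rminus_diag Rabs_R0; lra]. Qed.

Lemma contp_coord i x : contp (fun y : vec n => y i) x.
Proof. move=> eps He; exists eps; split=> // y Hy; exact: Hy. Qed.

Lemma contp_plus f g x : contp f x -> contp g x -> contp (fun y => f y + g y) x.
Proof.
move=> Hf Hg eps He.
case: (Hf (eps/2) ltac:(lra)) => d1 [H1 F1]; case: (Hg (eps/2) ltac:(lra)) => d2 [H2 G2].
exists (Rmin d1 d2); split; first exact: Rmin_pos.
move=> y Hy.
have h1 := F1 y (fun i => Rlt_le_trans _ _ _ (Hy i) (Rmin_l _ _)).
have h2 := G2 y (fun i => Rlt_le_trans _ _ _ (Hy i) (Rmin_r _ _)).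
have -> : f y + g y - (f x + g x) = (f y - f x) + (g y - g x) by ring.
apply: (Rle_lt_trans _ _ _ (Rabs_triang _ _)); lra.
Qed.

Lemma contp_comp1 (h : R -> R) f x : contp f x -> continuity_pt h (f x) -> contp (fun y => h (f y)) x.
Proof.
move=> Hf Hh eps He.
move: Hh => /continuity_pt_locally /(_ (mkposreal eps He)) [d Hd].
case: (Hf d (cond_pos d)) => d1 [H1 F1]. exists d1; split=> // y Hy.
apply: (Hd (f y)). exact: F1.
Qed.

Lemma contp_mult f g x : contp f x -> contp g x -> contp (fun y => f y * g y) x.
Proof.
move=> Hf Hg eps He.
set K := Rabs (f x) + Rabs (g x) + 1.
have HK : 0 < K by rewrite /K; have := Rabs_pos (f x); have := Rabs_pos (g x); lra.
set e := Rmin 1 (eps / (4 * K)).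
have He' : 0 < e by apply: Rmin_pos; [lra | apply: Rdiv_lt_0_compat; lra].
case: (Hf e He') => d1 [H1 F1]; case: (Hg e He') => d2 [H2 G2].
exists (Rmin d1 d2); split; first exact: Rmin_pos.
move=> y Hy.
have h1 := F1 y (fun i => Rlt_le_trans _ _ _ (Hy i) (Rmin_l _ _)).
have h2 := G2 y (fun i => Rlt_le_trans _ _ _ (Hy i) (Rmin_r _ _)).
have -> : f y * g y - f x * g x = (f y - f x) * g y + f x * (g y - g x) by ring.
apply: (Rle_lt_trans _ _ _ (Rabs_triang _ _)). rewrite !Rabs_mult.
have e1 : e <= 1 by exact: Rmin_l.
have e2 : e <= eps / (4 * K) by exact: Rmin_r.
have gy : Rabs (g y) <= Rabs (g x) + 1.
  have := Rabs_triang_inv (g y) (g x); lra.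
have A1 : Rabs (f y - f x) * Rabs (g y) <= e * K.
  apply: Rmult_le_compat; try exact: Rabs_pos; try lra.
  rewrite /K; have := Rabs_pos (f x); lra.
have A2 : Rabs (f x) * Rabs (g y - g x) <= e * K.
  rewrite (Rmult_comm e K).
  apply: Rmult_le_compat; try exact: Rabs_pos; try lra.
  rewrite /K; have := Rabs_pos (g x); lra.
have A3 : e * K <= eps / 4.
  have : e * K <= eps / (4 * K) * K by apply: Rmult_le_compat_r; lra.
  have -> : eps / (4 * K) * K = eps / 4 by field; lra.
  done.
lra.
Qed.

Lemma contp_loc f g x : (exists d, 0 < d /\ forall y, (forall i, Rabs (y i - x i) < d) -> f y = g y) ->
  contp f x -> contp g x.
Proof.
move=> [d [Hd E]] Hf eps He. case: (Hf eps He) => d1 [H1 F1].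
exists (Rmin d d1); split; first exact: Rmin_pos.
move=> y Hy. rewrite -E; last by move=> i; apply: (Rlt_le_trans _ _ _ (Hy i)); exact: Rmin_l.
rewrite -(E x); last by move=> i; rewrite Rminus_diag Rabs_R0.
apply: F1 => i; apply: (Rlt_le_trans _ _ _ (Hy i)); exact: Rmin_r.
Qed.

Lemma contp_sum_seq (F : 'I_n -> vec n -> R) x (s : seq 'I_n) : (forall i, contp (F i) x) ->
  contp (fun y => \big[Rplus/0]_(i <- s) F i y) x.
Proof.
move=> H; elim: s => [|a s IH].
  apply: (contp_loc (fun _ => 0)); last exact: contp_const.
  exists 1; split; [lra | move=> y _; by rewrite big_nil].
apply: (contp_loc (fun y => F a y + \big[Rplus/0]_(i <- s) F i y)).
  exists 1; split; [lra | move=> y _; by rewrite big_cons].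
exact: contp_plus.
Qed.

Lemma contp_sum (F : 'I_n -> vec n -> R) x : (forall i, contp (F i) x) ->
  contp (fun y => \big[Rplus/0]_(i < n) F i y) x.
Proof. move=> H; exact: (contp_sum_seq F x (index_enum _) H). Qed.

End ContP.

Lemma dext_loc f g x l : (exists d, 0 < d /\ forall y, Rabs (y - x) < d -> f y = g y) ->
  derivable_pt_lim f x l -> derivable_pt_lim g x l.
Proof.
move=> [d [Hd E]] Hf eps He. case: (Hf eps He) => d1 Hd1.
have Hp : 0 < Rmin d d1 by apply: Rmin_pos; [lra | exact: cond_pos].
exists (mkposreal _ Hp) => h hn hh. simpl in hh.
have hm := Rmin_l d d1.
rewrite -E; last by rewrite (_ : x + h - x = h); [lra | ring].
rewrite -(E x); last by rewrite Rminus_diag Rabs_R0.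
apply: Hd1 => //. have := Rmin_r d d1; lra.
Qed.

Lemma Rpower_1_l e : Rpower 1 e = 1.
Proof. by rewrite /Rpower ln_1 Rmult_0_r exp_0. Qed.

Lemma Rpower_pos' a e : 0 < Rpower a e.
Proof. rewrite /Rpower; exact: exp_pos. Qed.

Lemma cont_Rpower e r : 0 < r -> continuity_pt (fun s => Rpower s e) r.
Proof.
move=> Hr; apply: derivable_continuous_pt; exists (e * Rpower r (e - 1)).
exact: derivable_pt_lim_power.
Qed.



Lemma cont_Rpower_inv e r : 0 < r -> continuity_pt (fun s => Rpower (/ s) e) r.
Proof.
move=> Hr.
have r0 : r <> 0 by lra.
have ri : 0 < / r by apply: Rinv_0_lt_compat.
have := continuity_pt_comp (/ (fun s : R => s))%F (fun s => Rpower s e) r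
  (continuity_pt_inv (fun s => s) r (continuity_pt_id r) r0).
move=> /(_ (cont_Rpower e _ ri)). done.
Qed.

Definition vanish_near {n} (f : vec n -> R) (x : vec n) :=
  exists d, 0 < d /\ forall y, (forall i, Rabs (y i - x i) < d) -> f y = 0.

Lemma vanish_open {n} (f : vec n -> R) x : vanish_near f x ->
  exists d, 0 < d /\ forall y, (forall i, Rabs (y i - x i) < d) -> vanish_near f y.
Proof.
move=> [d [Hd H]]; exists (d / 2); split; first lra.
move=> y Hy; exists (d / 2); split; first lra.
move=> z Hz; apply: H => i. have := Hy i; have := Hz i.
have := Rabs_triang (z i - y i) (y i - x i).
have -> : z i - y i + (y i - x i) = z i - x i by ring. lra.
Qed.

Lemma deriv_vanish {n} (f : vec n -> R) df x i : partials f df -> vanish_near f x -> df i x = 0.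
Proof.
move=> Hp [d [Hd H]].
apply: (uniqueness_limite (fun t => f (upd x i t)) (x i)); first exact: Hp.
apply: (dext_loc (fun _ => 0)); last exact: derivable_pt_lim_const.
exists d; split=> // t ht; symmetry; apply: H => j.
case: (eqVneq j i) => [->|Nj]; first by rewrite upd_at.
rewrite upd_other // Rminus_diag Rabs_R0; lra.
Qed.

Section Homog.
Variable n : nat.
Variable nu : 'I_n -> R.
Variable N : vec n -> R.
Hypothesis Hnu : forall i, 0 < nu i.
Hypothesis HNc : cont_vec N.
Hypothesis HN0 : forall x, 0 <= N x.
Hypothesis HNd : forall lam x, 0 < lam -> N (dil nu lam x) = lam * N x.
Hypothesis HNz : forall x, N x = 0 <-> x = vzero n.

Lemma dil_dil a b x : 0 < a -> 0 < b -> dil nu a (dil nu b x) = dil nu (a * b) x.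
Proof.
move=> Ha Hb; apply: functional_extensionality => i; rewrite /dil -Rmult_assoc.
by rewrite Rpower_mult_distr.
Qed.

Lemma dil_1 x : dil nu 1 x = x.
Proof. apply: functional_extensionality => i; by rewrite /dil Rpower_1_l Rmult_1_l. Qed.

Lemma dil_zero a : dil nu a (vzero n) = vzero n.
Proof. apply: functional_extensionality => i; by rewrite /dil /vzero Rmult_0_r. Qed.

Lemma N_zero : N (vzero n) = 0.
Proof using Hnu HNc HN0 HNd HNz. by apply/HNz. Qed.

Lemma Nposv x : x <> vzero n -> 0 < N x.
Proof using Hnu HNc HN0 HNd HNz. move=> Hx; have := HN0 x; case/Rle_lt_or_eq_dec => // E; exfalso; apply: Hx; apply/HNz; by rewrite E. Qed.

Lemma dil_back x : x <> vzero n -> dil nu (N x) (dil nu (/ N x) x) = x.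
Proof using Hnu HNc HN0 HNd HNz.
move=> Hx; have HN := Nposv x Hx.
rewrite dil_dil //; last by apply: Rinv_0_lt_compat.
by rewrite Rinv_r ?dil_1 //; lra.
Qed.

Lemma rad_dil (f Rf : vec n -> R) : radial_deriv nu N f Rf ->
  forall x mu, 0 < mu -> derivable_pt_lim (fun m => f (dil nu m x)) mu (N x * Rf (dil nu mu x)).
Proof using Hnu HNc HN0 HNd HNz.
move=> [HR0 HR] x mu Hmu.
case: (classic (x = vzero n)) => [->|Hx].
  rewrite N_zero Rmult_0_l.
  apply: (dext (fun _ => f (vzero n))); last exact: derivable_pt_lim_const.
  by move=> m; rewrite dil_zero.
have HNx := Nposv x Hx.
set z := dil nu mu x.
have Hz : z <> vzero n.
  move=> E; have := HNd mu x Hmu; rewrite -/z E N_zero => E'. nra.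
have Nz : N z = mu * N x by rewrite /z HNd.
have yz : dil nu (/ N z) z = dil nu (/ N x) x.
  have hi : 0 < / (mu * N x) by apply: Rinv_0_lt_compat; nra.
  rewrite Nz /z dil_dil //.
  congr dil; field; lra.
have H1 := HR z Hz. rewrite yz Nz in H1.
have H2 : derivable_pt_lim (fun m => m * N x) mu (N x).
  have := derivable_pt_lim_scal_right id mu 1 (N x) (derivable_pt_lim_id mu).
  by rewrite Rmult_1_l.
have := derivable_pt_lim_comp (fun m => m * N x) (fun r => f (dil nu r (dil nu (/ N x) x))) mu _ _ H2 H1.
rewrite Rmult_comm. apply: dext_loc.
exists mu; split=> // m hm.
have hm0 : 0 < m by move: hm => /Rabs_def2; lra.
have hi : 0 < / N x by apply: Rinv_0_lt_compat.
have hmn : 0 < m * N x by nra.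
rewrite /Ranalysis1.comp /= dil_dil //.
congr (f (dil nu _ x)). field; lra.
Qed.

Lemma rad_formula (f Rf : vec n -> R) df : radial_deriv nu N f Rf -> partials f df ->
  (forall i, cont_vec (df i)) -> forall x, x <> vzero n ->
  Rf x = \big[Rplus/0]_(i < n) (df i x * (nu i * Rpower (N x) (nu i - 1) * (Rpower (/ N x) (nu i) * x i))).
Proof using Hnu HNc HN0 HNd HNz.
move=> [_ HR] Hp Hc x Hx.
have HNx := Nposv x Hx.
have := chain n f df (fun r => dil nu r (dil nu (/ N x) x))
   (fun i => nu i * Rpower (N x) (nu i - 1) * (Rpower (/ N x) (nu i) * x i)) (N x) Hp.
rewrite dil_back //. move=> /(_ (fun i => Hc i x)) H.
apply: (uniqueness_limite _ _ _ _ (HR x Hx)). apply: H => i.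
rewrite /dil. apply: derivable_pt_lim_scal_right. exact: derivable_pt_lim_power.
Qed.

Lemma rad_vanish (f Rf : vec n -> R) df : radial_deriv nu N f Rf -> partials f df ->
  (forall i, cont_vec (df i)) -> forall x, vanish_near f x -> Rf x = 0.
Proof using Hnu HNc HN0 HNd HNz.
move=> HR Hp Hc x Hv.
case: (classic (x = vzero n)) => [->|Hx]; first by case: HR.
rewrite (rad_formula f Rf df HR Hp Hc x Hx) big1 // => i _.
by rewrite (deriv_vanish f df x i Hp Hv) Rmult_0_l.
Qed.

Lemma rad_cont (f Rf : vec n -> R) df : radial_deriv nu N f Rf -> partials f df ->
  (forall i, cont_vec (df i)) -> vanish_near f (vzero n) -> cont_vec Rf.
Proof using Hnu HNc HN0 HNd HNz.
move=> HR Hp Hc H0 x; change (contp Rf x).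
case: (classic (x = vzero n)) => [->|Hx].
  apply: (contp_loc _ (fun _ => 0)); last exact: contp_const.
  case: (vanish_open f _ H0) => d [Hd Hv]; exists d; split=> // y Hy.
  by rewrite (rad_vanish f Rf df HR Hp Hc y (Hv y Hy)).
have HNx := Nposv x Hx.
apply: (contp_loc _ (fun y => \big[Rplus/0]_(i < n)
   (df i y * (nu i * Rpower (N y) (nu i - 1) * (Rpower (/ N y) (nu i) * y i))))).
  case: (HNc x (N x) HNx) => d [Hd Hy]; exists d; split=> // y hy.
  have := Hy y hy => hN.
  rewrite (rad_formula f Rf df HR Hp Hc y) //.
  move=> E; move: hN; rewrite E N_zero. rewrite Rminus_0_l Rabs_Ropp Rabs_pos_eq; lra.
apply: contp_sum => i.
apply: contp_mult; first exact: Hc.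
apply: contp_mult; first apply: contp_mult.
- exact: contp_const.
- apply: (contp_comp1 _ (fun s => Rpower s (nu i - 1)) N); first exact: HNc.
  exact: cont_Rpower.
- apply: contp_mult; last exact: contp_coord.
  apply: (contp_comp1 _ (fun s => Rpower (/ s) (nu i)) N); first exact: HNc.
  exact: cont_Rpower_inv.
Qed.

End Homog.



Definition jcontp {n} (G : R -> vec n -> R) l0 x0 := forall eps, 0 < eps -> exists d, 0 < d /\
  forall l y, Rabs (l - l0) < d -> (forall i, Rabs (y i - x0 i) < d) -> Rabs (G l y - G l0 x0) < eps.

Section JC.
Variable n : nat.
Implicit Types G H : R -> vec n -> R.

Lemma jc_x (f : vec n -> R) l0 x0 : contp f x0 -> jcontp (fun _ y => f y) l0 x0.
Proof. move=> H eps He; case: (H eps He) => d [Hd Hy]; exists d; split=> // l y _; exact: Hy. Qed.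

Lemma jc_l (h : R -> R) l0 (x0 : vec n) : continuity_pt h l0 -> jcontp (fun l _ => h l) l0 x0.
Proof.
move=> /continuity_pt_locally H eps He. case: (H (mkposreal eps He)) => d Hd.
exists d; split; first exact: cond_pos. move=> l y hl _; exact: (Hd l hl).
Qed.

Lemma jc_plus G H l0 x0 : jcontp G l0 x0 -> jcontp H l0 x0 -> jcontp (fun l y => G l y + H l y) l0 x0.
Proof.
move=> Hf Hg eps He.
have He2 : 0 < eps / 2 by lra.
case: (Hf _ He2) => d1 [H1 F1]; case: (Hg _ He2) => d2 [H2 G2].
exists (Rmin d1 d2); split; first exact: Rmin_pos.
move=> l y hl Hy.
have h1 := F1 l y (Rlt_le_trans _ _ _ hl (Rmin_l _ _)) (fun i => Rlt_le_trans _ _ _ (Hy i) (Rmin_l _ _)).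
have h2 := G2 l y (Rlt_le_trans _ _ _ hl (Rmin_r _ _)) (fun i => Rlt_le_trans _ _ _ (Hy i) (Rmin_r _ _)).
have -> : G l y + H l y - (G l0 x0 + H l0 x0) = (G l y - G l0 x0) + (H l y - H l0 x0) by ring.
apply: (Rle_lt_trans _ _ _ (Rabs_triang _ _)); lra.
Qed.

Lemma jc_comp1 (h : R -> R) G l0 x0 : jcontp G l0 x0 -> continuity_pt h (G l0 x0) ->
  jcontp (fun l y => h (G l y)) l0 x0.
Proof.
move=> Hf Hh eps He.
move: Hh => /continuity_pt_locally /(_ (mkposreal eps He)) [d Hd].
case: (Hf d (cond_pos d)) => d1 [H1 F1]. exists d1; split=> // l y hl Hy.
apply: (Hd (G l y)). exact: F1.
Qed.

Lemma cont2_mult a b eps : 0 < eps -> exists d, 0 < d /\ forall a' b', Rabs (a' - a) < d -> Rabs (b' - b) < d ->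
  Rabs (a' * b' - a * b) < eps.
Proof.
move=> He.
set K := Rabs a + Rabs b + 1.
have HK : 0 < K by rewrite /K; have := Rabs_pos a; have := Rabs_pos b; lra.
exists (Rmin 1 (eps / (4 * K))); split.
  apply: Rmin_pos; [lra | apply: Rdiv_lt_0_compat; lra].
move=> a' b' ha hb.
have e1 := Rmin_l 1 (eps / (4 * K)); have e2 := Rmin_r 1 (eps / (4 * K)).
set e := Rmin 1 (eps / (4 * K)) in ha hb e1 e2.
have -> : a' * b' - a * b = (a' - a) * b' + a * (b' - b) by ring.
apply: (Rle_lt_trans _ _ _ (Rabs_triang _ _)). rewrite !Rabs_mult.
have gy : Rabs b' <= Rabs b + 1 by have := Rabs_triang_inv b' b; lra.
have A1 : Rabs (a' - a) * Rabs b' <= e * K.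
  apply: Rmult_le_compat; try exact: Rabs_pos; try lra.
  rewrite /K; have := Rabs_pos a; lra.
have A2 : Rabs a * Rabs (b' - b) <= e * K.
  rewrite (Rmult_comm e K).
  apply: Rmult_le_compat; try exact: Rabs_pos; try lra.
  rewrite /K; have := Rabs_pos b; lra.
have A3 : e * K <= eps / 4.
  have : e * K <= eps / (4 * K) * K by apply: Rmult_le_compat_r; lra.
  have -> : eps / (4 * K) * K = eps / 4 by field; lra.
  done.
lra.
Qed.

Lemma jc_mult G H l0 x0 : jcontp G l0 x0 -> jcontp H l0 x0 -> jcontp (fun l y => G l y * H l y) l0 x0.
Proof.
move=> Hf Hg eps He.
case: (cont2_mult (G l0 x0) (H l0 x0) eps He) => e [He' Hm].
case: (Hf e He') => d1 [H1 F1]; case: (Hg e He') => d2 [H2 G2].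
exists (Rmin d1 d2); split; first exact: Rmin_pos.
move=> l y hl Hy. apply: Hm.
  exact: (F1 l y (Rlt_le_trans _ _ _ hl (Rmin_l _ _)) (fun i => Rlt_le_trans _ _ _ (Hy i) (Rmin_l _ _))).
exact: (G2 l y (Rlt_le_trans _ _ _ hl (Rmin_r _ _)) (fun i => Rlt_le_trans _ _ _ (Hy i) (Rmin_r _ _))).
Qed.

Lemma jc_vec (f : vec n -> R) (V : R -> vec n -> vec n) l0 x0 : contp f (V l0 x0) ->
  (forall i, jcontp (fun l y => V l y i) l0 x0) -> jcontp (fun l y => f (V l y)) l0 x0.
Proof.
move=> Hf HV eps He. case: (Hf eps He) => d [Hd Hy].
case: (fin_delta n (fun i dd => forall l y, Rabs (l - l0) < dd -> (forall j, Rabs (y j - x0 j) < dd) ->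
    Rabs (V l y i - V l0 x0 i) < d)).
- move=> i dd dd' hd H l y hl hy; apply: H; first lra. move=> j; have := hy j; lra.
- move=> i; exact: (HV i d Hd).
move=> dd [Hdd H]. exists dd; split=> // l y hl hy. apply: Hy => i; exact: H.
Qed.

Lemma jc_loc G H l0 x0 : (exists d, 0 < d /\ forall l y, Rabs (l - l0) < d ->
   (forall i, Rabs (y i - x0 i) < d) -> G l y = H l y) -> jcontp G l0 x0 -> jcontp H l0 x0.
Proof.
move=> [d [Hd E]] Hf eps He. case: (Hf eps He) => d1 [H1 F1].
exists (Rmin d d1); split; first exact: Rmin_pos.
move=> l y hl Hy. rewrite -E; first last.
  by move=> i; apply: (Rlt_le_trans _ _ _ (Hy i)); exact: Rmin_l.
  by apply: (Rlt_le_trans _ _ _ hl); exact: Rmin_l.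
rewrite -(E l0 x0); first last.
  by move=> i; rewrite Rminus_diag Rabs_R0.
  by rewrite Rminus_diag Rabs_R0.
apply: F1. by apply: (Rlt_le_trans _ _ _ hl); exact: Rmin_r.
move=> i; apply: (Rlt_le_trans _ _ _ (Hy i)); exact: Rmin_r.
Qed.

End JC.

Lemma mvt_between (F F' : R -> R) a b :
  (forall t, Rmin a b <= t <= Rmax a b -> derivable_pt_lim F t (F' t)) ->
  exists c, F b - F a = F' c * (b - a) /\ Rmin a b <= c <= Rmax a b.
Proof.
move=> H. case: (Rtotal_order a b) => [lt|[eq|gt]].
- have Hd : forall c, a <= c <= b -> derivable_pt_lim F c (F' c).
    move=> c hc; apply: H; rewrite Rmin_left ?Rmax_right; lra.
  case: (MVT_cor2 F F' a b lt Hd) => c [E hc].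
  exists c; split=> //. rewrite Rmin_left ?Rmax_right; lra.
- subst; exists b; split; [ring | rewrite Rmin_left ?Rmax_right; lra].
- have Hd : forall c, b <= c <= a -> derivable_pt_lim F c (F' c).
    move=> c hc; apply: H; rewrite Rmin_right ?Rmax_left; lra.
  case: (MVT_cor2 F F' b a gt Hd) => c [E hc].
  exists c; split; first lra. rewrite Rmin_right ?Rmax_left; lra.
Qed.

Definition clampR (l : R) := Rmax (1/2) (Rmin 2 l).

Lemma clamp_lo l : l < 1/2 -> clampR l = 1/2.
Proof. move=> H; rewrite /clampR Rmin_right; last lra. rewrite Rmax_left; lra. Qed.
Lemma clamp_hi l : 2 < l -> clampR l = 2.
Proof. move=> H; rewrite /clampR Rmin_left; last lra. rewrite Rmax_right; lra. Qed.
Lemma clamp_id l : 1/2 <= l <= 2 -> clampR l = l.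
Proof. move=> H; rewrite /clampR Rmin_right; last lra. rewrite Rmax_right; lra. Qed.

Lemma clamp_range l : 1/2 <= clampR l <= 2.
Proof.
case: (Rlt_le_dec l (1/2)) => h1; first by rewrite clamp_lo //; lra.
case: (Rlt_le_dec 2 l) => h2; first by rewrite clamp_hi //; lra.
rewrite clamp_id; lra.
Qed.

Lemma clamp_lip l l' : Rabs (clampR l - clampR l') <= Rabs (l - l').
Proof.
have C : forall x, (x < 1/2 /\ clampR x = 1/2) \/ (2 < x /\ clampR x = 2) \/ (1/2 <= x <= 2 /\ clampR x = x).
  move=> x. case: (Rlt_le_dec x (1/2)) => h1; first by left; split=> //; rewrite clamp_lo.
  case: (Rlt_le_dec 2 x) => h2; first by right; left; split=> //; rewrite clamp_hi.
  right; right; split; [lra | rewrite clamp_id //; lra].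
case: (C l) => [[h e]|[[h e]|[h e]]]; rewrite e;
case: (C l') => [[h' e']|[[h' e']|[h' e']]]; rewrite e'; split_Rabs; lra.
Qed.

Lemma clamp_cont l : continuity_pt clampR l.
Proof.
apply/continuity_pt_locally => eps. exists eps => y hy.
apply: (Rle_lt_trans _ _ _ (clamp_lip y l)). exact: hy.
Qed.



Lemma dval f x l l' : derivable_pt_lim f x l -> l = l' -> derivable_pt_lim f x l'.
Proof. by move=> H <-. Qed.

Lemma contp_inv n (F : vec n -> R) x : contp F x -> F x <> 0 -> contp (fun y => / F y) x.
Proof.
move=> H H0; apply: (contp_comp1 _ (fun t => / t) F x H).
exact: (continuity_pt_inv (fun s => s) _ (continuity_pt_id _) H0).
Qed.

Lemma contp_sq n (F : vec n -> R) x : contp F x -> contp (fun y => F y ^ 2) x.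
Proof.
move=> H; apply: (contp_loc _ (fun y => F y * F y)); last exact: contp_mult.
exists 1; split; [lra | move=> y _; ring].
Qed.

Section Main.
Variable n : nat.
Variable nu : 'I_n -> R.
Variable N : vec n -> R.
Hypothesis Hnu : forall i, 0 < nu i.
Hypothesis HNc : cont_vec N.
Hypothesis HN0 : forall x, 0 <= N x.
Hypothesis HNd : forall lam x, 0 < lam -> N (dil nu lam x) = lam * N x.
Hypothesis HNz : forall x, N x = 0 <-> x = vzero n.
Variables u v Ru Rv du dv : vec n -> R.
Variables (Du Dv : 'I_n -> vec n -> R).
Hypothesis HRu : radial_deriv nu N u Ru.
Hypothesis HRv : radial_deriv nu N v Rv.
Hypothesis HDu : partials u Du.
Hypothesis HDv : partials v Dv.
Hypothesis HDuc : forall i, cont_vec (Du i).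
Hypothesis HDvc : forall i, cont_vec (Dv i).
Hypothesis Huc : cont_vec u.
Hypothesis Hvc : cont_vec v.
Variables Rb r0 : R.
Hypothesis HRb : 0 < Rb.
Hypothesis Hr0 : 0 < r0.
Hypothesis Hout : forall x, (exists i, Rb < Rabs (x i)) -> u x = 0 /\ v x = 0.
Hypothesis Hin : forall x, (forall i, Rabs (x i) < r0) -> u x = 0 /\ v x = 0.
Variable alpha : R.

Definition Zp x := u x = 0 /\ v x = 0 /\ Ru x = 0 /\ Rv x = 0.

Lemma Zout x : (exists i, Rb < Rabs (x i)) -> Zp x.
Proof.
move=> [i hi].
have V : forall (f : vec n -> R), (forall y, (exists i, Rb < Rabs (y i)) -> f y = 0) -> vanish_near f x.
  move=> f Hf; exists (Rabs (x i) - Rb); split; first lra.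
  move=> y Hy; apply: Hf; exists i. have := Hy i. have := Rabs_triang_inv (x i) (x i - y i).
  have -> : x i - (x i - y i) = y i by ring. rewrite Rabs_minus_sym. lra.
have Vu : vanish_near u x by apply: V => y hy; case: (Hout y hy).
have Vv : vanish_near v x by apply: V => y hy; case: (Hout y hy).
split; first by case: (Hout x); [exists i|].
split; first by case: (Hout x); [exists i|].
split; [exact: (rad_vanish n nu N Hnu HNc HN0 HNd HNz u Ru Du HRu HDu HDuc x Vu)
       |exact: (rad_vanish n nu N Hnu HNc HN0 HNd HNz v Rv Dv HRv HDv HDvc x Vv)].
Qed.

Lemma V0u : vanish_near u (vzero n).
Proof. exists r0; split=> // y Hy; case: (Hin y) => // i; have := Hy i; by rewrite /vzero Rminus_0_r. Qed.
Lemma V0v : vanish_near v (vzero n).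
Proof. exists r0; split=> // y Hy; case: (Hin y) => // i; have := Hy i; by rewrite /vzero Rminus_0_r. Qed.

Lemma Zin : exists d, 0 < d /\ forall y, (forall i, Rabs (y i - vzero n i) < d) -> Zp y.
Proof.
case: (vanish_open u _ V0u) => d1 [H1 F1]; case: (vanish_open v _ V0v) => d2 [H2 F2].
exists (Rmin d1 d2); split; first exact: Rmin_pos.
move=> y Hy.
have Vu := F1 y (fun i => Rlt_le_trans _ _ _ (Hy i) (Rmin_l _ _)).
have Vv := F2 y (fun i => Rlt_le_trans _ _ _ (Hy i) (Rmin_r _ _)).
split; first by case: Vu => d [? H]; apply: H => i; rewrite Rminus_diag Rabs_R0.
split; first by case: Vv => d [? H]; apply: H => i; rewrite Rminus_diag Rabs_R0.
split; [exact: (rad_vanish n nu N Hnu HNc HN0 HNd HNz u Ru Du HRu HDu HDuc y Vu)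
       |exact: (rad_vanish n nu N Hnu HNc HN0 HNd HNz v Rv Dv HRv HDv HDvc y Vv)].
Qed.

Lemma Z0 : Zp (vzero n).
Proof. case: Zin => d [Hd H]; apply: H => i; rewrite Rminus_diag Rabs_R0; lra. Qed.

Lemma cont_gen (Fn : vec n -> R) : (forall x, Zp x -> Fn x = 0) ->
  (forall x, x <> vzero n -> contp Fn x) -> cont_vec Fn.
Proof.
move=> HZ HC x; change (contp Fn x).
case: (classic (x = vzero n)) => [->|Hx]; last exact: HC.
apply: (contp_loc _ (fun _ => 0)); last exact: contp_const.
case: Zin => d [Hd H]; exists d; split=> // y Hy. by rewrite HZ //; apply: H.
Qed.

Lemma contp_NR e x : x <> vzero n -> contp (fun y => Rpower (N y) e) x.
Proof.
move=> Hx; apply: (contp_comp1 _ (fun s => Rpower s e) N); first exact: HNc.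
apply: (cont_Rpower e (N x)). exact: (Nposv n nu N Hnu HNc HN0 HNd HNz x Hx).
Qed.

Lemma Ruc : cont_vec Ru.
Proof. exact: (rad_cont n nu N Hnu HNc HN0 HNd HNz u Ru Du HRu HDu HDuc V0u). Qed.
Lemma Rvc : cont_vec Rv.
Proof. exact: (rad_cont n nu N Hnu HNc HN0 HNd HNz v Rv Dv HRv HDv HDvc V0v). Qed.

Definition pp := 2 * alpha + 2.
Definition ww x := u x * u x + v x * v x.
Definition gg x := ww x * Rpower (N x) (- pp).
Definition Rg x := 2 * (u x * Ru x + v x * Rv x) * Rpower (N x) (- pp)
  + ww x * (- pp * Rpower (N x) (- pp - 1)).

Lemma gg_Z x : Zp x -> gg x = 0.
Proof. case=> [a [b _]]; rewrite /gg /ww a b; ring. Qed.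
Lemma Rg_Z x : Zp x -> Rg x = 0.
Proof. case=> [a [b [c d]]]; rewrite /Rg /ww a b c d; ring. Qed.

Lemma ww_cont x : contp ww x.
Proof. apply: contp_plus; apply: contp_mult; [exact: Huc|exact: Huc|exact: Hvc|exact: Hvc]. Qed.

Lemma gg_cont : cont_vec gg.
Proof.
apply: cont_gen; first exact: gg_Z.
move=> x Hx; apply: contp_mult; [exact: ww_cont | exact: contp_NR].
Qed.

Lemma Rg_cont : cont_vec Rg.
Proof.
apply: cont_gen; first exact: Rg_Z.
move=> x Hx; apply: contp_plus; apply: contp_mult.
- apply: contp_mult; first exact: contp_const.
  apply: contp_plus; apply: contp_mult; [exact: Huc|exact: Ruc|exact: Hvc|exact: Rvc].
- exact: contp_NR.
- exact: ww_cont.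
- apply: contp_mult; [exact: contp_const | exact: contp_NR].
Qed.

Lemma gg_deriv x mu : 0 < mu ->
  derivable_pt_lim (fun m => gg (dil nu m x)) mu (N x * Rg (dil nu mu x)).
Proof.
move=> Hmu.
case: (classic (x = vzero n)) => [->|Hx].
  rewrite (N_zero n nu N Hnu HNc HN0 HNd HNz) Rmult_0_l.
  apply: (dext (fun _ => gg (vzero n))); last exact: derivable_pt_lim_const.
  by move=> m; rewrite dil_zero.
have HNx := Nposv n nu N Hnu HNc HN0 HNd HNz x Hx.
set z := dil nu mu x.
have Nz : N z = mu * N x by rewrite /z HNd.
have Du' := rad_dil n nu N Hnu HNc HN0 HNd HNz u Ru HRu x mu Hmu.
have Dv' := rad_dil n nu N Hnu HNc HN0 HNd HNz v Rv HRv x mu Hmu.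
have DW := dplus _ _ _ _ _ (dmult _ _ _ _ _ Du' Du') (dmult _ _ _ _ _ Dv' Dv').
have H2 : derivable_pt_lim (fun m => m * N x) mu (N x).
  have := derivable_pt_lim_scal_right id mu 1 (N x) (derivable_pt_lim_id mu).
  by rewrite Rmult_1_l.
have DP := derivable_pt_lim_comp (fun m => m * N x) (fun s => Rpower s (- pp)) mu _ _ H2
  (derivable_pt_lim_power (mu * N x) (- pp) ltac:(nra)).
have DG := dmult _ _ _ _ _ DW DP.
apply: (dext_loc (fun m => (u (dil nu m x) * u (dil nu m x) + v (dil nu m x) * v (dil nu m x))
   * Ranalysis1.comp (fun s => Rpower s (- pp)) (fun m => m * N x) m)).
  exists mu; split=> // m hm.
  have hm0 : 0 < m by move: hm => /Rabs_def2; lra.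
  by rewrite /gg /ww /Ranalysis1.comp /= HNd.
apply: (dval _ _ _ _ DG).
rewrite /Ranalysis1.comp /= /Rg -/z Nz /ww. ring.
Qed.

Lemma kappa : exists k, 0 < k <= 1 /\ forall i c, 1/2 <= c -> k <= Rpower c (nu i).
Proof.
case: (fin_delta n (fun i d => d <= Rpower (1/2) (nu i) /\ d <= 1)).
- move=> i d d' hd [h1 h2]; lra.
- move=> i; exists (Rmin (Rpower (1/2) (nu i)) 1); split.
    apply: Rmin_pos; [exact: Rpower_pos' | lra].
  split; [exact: Rmin_l | exact: Rmin_r].
move=> k [Hk H]; exists (Rmin k 1); split.
  split; [by apply: Rmin_pos; lra | exact: Rmin_r].
move=> i c hc; case: (H i) => h1 _; apply: (Rle_trans _ _ _ (Rmin_l _ _)); apply: (Rle_trans _ _ _ h1).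
apply: Rle_Rpower_l; [have := Hnu i; lra | lra].
Qed.

Definition Phi (l : R) (x : vec n) : R :=
  if Req_EM_T (clampR l) 1 then N x * Rg x else (gg (dil nu (clampR l) x) - gg x) / (clampR l - 1).

Lemma Phi_supp k : 0 < k <= 1 -> (forall i c, 1/2 <= c -> k <= Rpower c (nu i)) ->
  supp_from Phi 0 (Rb / k).
Proof.
move=> [Hk Hk1] Hc l x [i [_ hi]].
have hb : Rb <= Rb / k.
  apply: (Rmult_le_reg_r k) => //. rewrite /Rdiv Rmult_assoc Rinv_l; nra.
have Zx : Zp x by apply: Zout; exists i; lra.
rewrite /Phi; case: Req_EM_T => [E|NE]; first by rewrite Rg_Z // Rmult_0_r.
rewrite (gg_Z x Zx) gg_Z; first by rewrite Rminus_diag /Rdiv Rmult_0_l.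
apply: Zout; exists i. rewrite /dil Rabs_mult (Rabs_pos_eq (Rpower _ _)); last exact: Rlt_le (Rpower_pos' _ _).
have := Hc i (clampR l) (proj1 (clamp_range l)).
have : k * (Rb / k) = Rb by field; lra.
nra.
Qed.

Definition Kf (l : R) (y : vec n) := N y * Rg (dil nu l y).

Lemma jc_dil_coord (h : R -> R) l0 (x0 : vec n) i : continuity_pt h l0 -> 0 < h l0 ->
  jcontp (fun l y => dil nu (h l) y i) l0 x0.
Proof.
move=> Hh Hp. apply: (jc_mult n (fun l _ => Rpower (h l) (nu i)) (fun _ y => y i)).
- apply: jc_l. apply: (continuity_pt_comp h (fun s => Rpower s (nu i))) => //.
  exact: cont_Rpower.
- apply: jc_x; exact: contp_coord.
Qed.

Lemma KJ x0 : jcontp Kf 1 x0.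
Proof.
apply: (jc_mult n (fun _ y => N y) (fun l y => Rg (dil nu l y))).
  apply: jc_x; exact: HNc.
apply: (jc_vec n Rg (fun l y => dil nu l y)); first exact: Rg_cont.
move=> i; apply: (jc_dil_coord (fun l => l)); [exact: continuity_pt_id | lra].
Qed.

Lemma Phi_jcont : jcont Phi.
Proof.
move=> l0 x0; change (jcontp Phi l0 x0).
case: (Req_EM_T (clampR l0) 1) => [E|NE].
- move=> eps He. case: (KJ x0 eps He) => d [Hd HK]. exists d; split=> // l y hl hy.
  have P0 : Phi l0 x0 = Kf 1 x0.
    rewrite /Phi /Kf dil_1; case: Req_EM_T => // NE; by exfalso.
  rewrite P0.
  have Hcl : Rabs (clampR l - 1) < d.
    have := clamp_lip l l0; rewrite E; lra.
  rewrite /Phi; case: Req_EM_T => [E'|NE'].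
    have -> : N y * Rg y = Kf 1 y by rewrite /Kf dil_1.
    apply: HK => //; rewrite Rminus_diag Rabs_R0; lra.
  set c := clampR l in Hcl NE' *.
  have Hc := clamp_range l; rewrite -/c in Hc.
  case: (mvt_between (fun m => gg (dil nu m y)) (fun m => Kf m y) 1 c).
    move=> t ht. apply: gg_deriv.
    have : 1/2 <= Rmin 1 c by apply: Rmin_glb; lra. lra.
  move=> xi [Exi Hxi].
  have -> : (gg (dil nu c y) - gg y) / (c - 1) = Kf xi y.
    rewrite dil_1 in Exi. rewrite Exi. field. lra.
  apply: HK => //.
  move: Hxi; rewrite /Rmin /Rmax; case: Rle_dec => h1 h2; split_Rabs; lra.
- apply: (jc_loc n (fun l y => (gg (dil nu (clampR l) y) + - gg y) * / (clampR l - 1))).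
    have Hd : 0 < Rabs (clampR l0 - 1) / 2.
      have : 0 < Rabs (clampR l0 - 1) by apply: Rabs_pos_lt; lra. lra.
    exists (Rabs (clampR l0 - 1) / 2); split=> // l y hl hy.
    have Hne : clampR l <> 1.
      move=> E; have := clamp_lip l l0; rewrite E. move: hl.
      rewrite Rabs_minus_sym. have -> : 1 - clampR l0 = - (clampR l0 - 1) by ring.
      rewrite Rabs_Ropp. lra.
    rewrite /Phi; case: Req_EM_T => // _.
  have Hc0 := clamp_range l0.
  apply: (jc_mult n (fun l y => gg (dil nu (clampR l) y) + - gg y) (fun l _ => / (clampR l - 1))).
    apply: (jc_plus n (fun l y => gg (dil nu (clampR l) y)) (fun _ y => - gg y)).
      apply: (jc_vec n gg (fun l y => dil nu (clampR l) y)); first exact: gg_cont.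
      move=> i; apply: jc_dil_coord; [exact: clamp_cont | lra].
    apply: jc_x. apply: (contp_comp1 _ Ropp gg); first exact: gg_cont.
    exact: (continuity_pt_opp (fun s => s) _ (continuity_pt_id _)).
  apply: jc_l.
  apply: (continuity_pt_inv (fun l => clampR l - 1)); last lra.
  apply: (continuity_pt_minus clampR (fun _ => 1)); [exact: clamp_cont | exact: continuity_pt_const].
Qed.

Lemma big_Rpower l : 0 < l ->
  \big[Rmult/1]_(i < n | (i < n)%N) Rpower l (nu i) = Rpower l (homdim nu).
Proof.
move=> Hl. rewrite (eq_bigl xpredT); last by move=> i; rewrite ltn_ord.
rewrite /homdim. symmetry. apply: (big_morph (Rpower l)).
  move=> a b; exact: Rpower_plus.
exact: Rpower_O.
Qed.

Lemma core I2 Im : LebInt n gg I2 -> LebInt n (fun x => N x * Rg x) Im -> Im = - homdim nu * I2.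
Proof.
move=> H2 Hm.
case: kappa => k [Hk Hkc].
have HB : 0 < Rb / k by apply: Rdiv_lt_0_compat; lra.
case: (exist_LebInt n Phi (Rb / k) HB Phi_jcont (Phi_supp k Hk Hkc)) => F [FC FI].
set Q := homdim nu.
have F1 : F 1 = Im.
  apply: (IntIter_unique n n (fun x => N x * Rg x) (vzero n)) => //.
  apply: (IntIter_ext n n (Phi 1)); last exact: FI.
  move=> y; rewrite /Phi clamp_id; last lra.
  case: Req_EM_T => // NE; by exfalso.
have Fl : forall l, 1/2 <= l <= 2 -> l <> 1 -> F l = / (l - 1) * (I2 * Rpower l (- Q)) + - / (l - 1) * I2.
  move=> l hl hl1.
  have Hc : forall i, 0 < Rpower l (nu i) by move=> i; exact: Rpower_pos'.
  have S := IntIter_scale n (fun i => Rpower l (nu i)) Hc gg n (leqnn n) (vzero n) I2.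
  have sz : sc (fun i => Rpower l (nu i)) (vzero n) = vzero n.
    apply: functional_extensionality => i; by rewrite /sc /vzero Rmult_0_r.
  rewrite sz big_Rpower in S; last lra.
  have L := IntIter_lin n n _ _ (/ (l - 1)) (- / (l - 1)) (vzero n) _ _ (S H2) H2.
  apply: (IntIter_unique n n (Phi l) (vzero n)); first exact: FI.
  rewrite Rpower_Ropp -/Q.
  have -> : I2 * / Rpower l Q = I2 / Rpower l Q by [].
  apply: (IntIter_ext n n _ (Phi l)); last exact: L.
  move=> y; rewrite /Phi clamp_id //.
  destruct (Req_EM_T l 1) as [E|NE]; first by exfalso.
  rewrite /sc /dil /Rdiv /=. ring.
apply: eq_of_small => eps He.
have He2 : 0 < eps / 2 by lra.
have HI : 0 < Rabs I2 + 1 by have := Rabs_pos I2; lra.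
have He3 : 0 < eps / (2 * (Rabs I2 + 1)) by apply: Rdiv_lt_0_compat; lra.
case: (FC 1 _ He2) => d1 [Hd1 C1].
have D := derivable_pt_lim_power 1 (- Q) Rlt_0_1.
rewrite Rpower_1_l Rmult_1_r in D.
case: (D _ He3) => d2 Hd2.
have [h [hpos [hh1 [hh2 hh3]]]] : exists h, 0 < h /\ h < d1 /\ h < d2 /\ h <= 1/4.
  have mpos : 0 < Rmin (Rmin d1 d2) (1/2).
    apply: Rmin_pos; [apply: Rmin_pos; [lra | exact: cond_pos] | lra].
  have hm := Rmin_l (Rmin d1 d2) (1/2); have hm2 := Rmin_r (Rmin d1 d2) (1/2).
  have hm3 := Rmin_l d1 d2; have hm4 := Rmin_r d1 d2.
  exists (Rmin (Rmin d1 d2) (1/2) / 2); lra.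
have Q1 := Hd2 h ltac:(lra) ltac:(rewrite Rabs_pos_eq; lra).
have Q2 := C1 (1 + h) ltac:(rewrite (_ : 1 + h - 1 = h); [rewrite Rabs_pos_eq; lra | ring]).
rewrite (Fl (1 + h)) in Q2; [| lra | lra].
rewrite F1 in Q2. rewrite Rpower_1_l in Q1.
have -> : Im - - Q * I2 = - (/ (1 + h - 1) * (I2 * Rpower (1 + h) (- Q)) + - / (1 + h - 1) * I2 - Im)
   + I2 * ((Rpower (1 + h) (- Q) - 1) / h - - Q).
  have -> : 1 + h - 1 = h by ring. field. lra.
apply: (Rle_lt_trans _ _ _ (Rabs_triang _ _)). rewrite Rabs_Ropp Rabs_mult.
have : Rabs I2 * Rabs ((Rpower (1 + h) (- Q) - 1) / h - - Q) <= Rabs I2 * (eps / (2 * (Rabs I2 + 1))).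
  apply: Rmult_le_compat_l; [exact: Rabs_pos | lra].
have : Rabs I2 * (eps / (2 * (Rabs I2 + 1))) < eps / 2.
  apply: (Rmult_lt_reg_r (2 * (Rabs I2 + 1))); first lra.
  rewrite Rmult_assoc /Rdiv Rmult_assoc Rinv_l; last lra.
  have := Rabs_pos I2; nra.
lra.
Qed.

Lemma exist_const (Fn : vec n -> R) : cont_vec Fn -> (forall x, Zp x -> Fn x = 0) ->
  exists I, LebInt n Fn I.
Proof.
move=> Hc HZ.
case: (exist_LebInt n (fun _ x => Fn x) Rb HRb).
- move=> l x; apply: jc_x; exact: Hc.
- move=> l x [i [_ hi]]; apply: HZ; apply: Zout; by exists i.
move=> F [_ FI]; exists (F 0); exact: FI.
Qed.

Lemma Rpower_ne0 t e : Rpower t e <> 0.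
Proof. have := Rpower_pos' t e; lra. Qed.

Lemma main_sec :
  exists I1 I2 I3 : R,
    LebInt n (fun x => (Ru x / Rpower (N x) alpha) ^ 2
                     + (Rv x / Rpower (N x) alpha) ^ 2) I1 /\
    LebInt n (fun x => (u x / Rpower (N x) (alpha + 1)) ^ 2
                     + (v x / Rpower (N x) (alpha + 1)) ^ 2) I2 /\
    LebInt n (fun x =>
        (Ru x / Rpower (N x) alpha
           + (homdim nu - 2 - 2 * alpha) / (2 * Rpower (N x) (alpha + 1)) * u x) ^ 2
      + (Rv x / Rpower (N x) alpha
           + (homdim nu - 2 - 2 * alpha) / (2 * Rpower (N x) (alpha + 1)) * v x) ^ 2) I3 /\
    I1 - ((homdim nu - 2) / 2 - alpha) ^ 2 * I2 = I3.
Proof using Hnu HNc HN0 HNd HNz HRu HRv HDu HDv HDuc HDvc Huc Hvc HRb Hr0 Hout Hin.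
set Q := homdim nu.
have NP : forall x, x <> vzero n -> 0 < N x := Nposv n nu N Hnu HNc HN0 HNd HNz.
have NZ := N_zero n nu N Hnu HNc HN0 HNd HNz.
case: (exist_const (fun x => (Ru x / Rpower (N x) alpha) ^ 2 + (Rv x / Rpower (N x) alpha) ^ 2)).
- apply: cont_gen; first by move=> x [a [b [c d]]]; rewrite c d /Rdiv; ring.
  move=> x Hx; rewrite /Rdiv; apply: contp_plus; apply: contp_sq; apply: contp_mult;
    [exact: Ruc | | exact: Rvc | ]; (apply: contp_inv; [exact: contp_NR | exact: Rpower_ne0]).
- by move=> x [a [b [c d]]]; rewrite c d /Rdiv; ring.
move=> I1 HI1.
case: (exist_const (fun x => (u x / Rpower (N x) (alpha + 1)) ^ 2 + (v x / Rpower (N x) (alpha + 1)) ^ 2)).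
- apply: cont_gen; first by move=> x [a [b [c d]]]; rewrite a b /Rdiv; ring.
  move=> x Hx; rewrite /Rdiv; apply: contp_plus; apply: contp_sq; apply: contp_mult;
    [exact: Huc | | exact: Hvc | ]; (apply: contp_inv; [exact: contp_NR | exact: Rpower_ne0]).
- by move=> x [a [b [c d]]]; rewrite a b /Rdiv; ring.
move=> I2 HI2.
case: (exist_const (fun x => (u x * Ru x + v x * Rv x) * Rpower (N x) (- (2 * alpha + 1)))).
- apply: cont_gen; first by move=> x [a [b [c d]]]; rewrite a b; ring.
  move=> x Hx; apply: contp_mult; last exact: contp_NR.
  apply: contp_plus; apply: contp_mult; [exact: Huc|exact: Ruc|exact: Hvc|exact: Rvc].
- by move=> x [a [b [c d]]]; rewrite a b; ring.
move=> Im HIm.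
have Hgg : LebInt n gg I2.
  apply: (IntIter_ext n n _ gg); last exact: HI2.
  move=> x. case: (classic (x = vzero n)) => [->|Hx].
    case: Z0 => [a [b _]]; rewrite /gg /ww a b /Rdiv; ring.
  have t0 := NP x Hx.
  rewrite /gg /ww /pp.
  have -> : Rpower (N x) (- (2 * alpha + 2)) = / (Rpower (N x) (alpha + 1) * Rpower (N x) (alpha + 1)).
    rewrite -Rpower_plus -Rpower_Ropp; congr Rpower; ring.
  have := Rpower_ne0 (N x) (alpha + 1) => h. rewrite /Rdiv; field; done.
have HNR : LebInt n (fun x => N x * Rg x) (2 * Im + - pp * I2).
  apply: (IntIter_ext n n (fun x => 2 * ((u x * Ru x + v x * Rv x) * Rpower (N x) (- (2 * alpha + 1)))
     + - pp * gg x)); last exact: IntIter_lin.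
  move=> x. case: (classic (x = vzero n)) => [->|Hx].
    rewrite NZ. case: Z0 => [a [b [c d]]]; rewrite /gg /ww a b c d; ring.
  have t0 := NP x Hx.
  have E1 : Rpower (N x) (- (2 * alpha + 1)) = N x * Rpower (N x) (- pp).
    rewrite -{2}(Rpower_1 (N x)) // -Rpower_plus; congr Rpower; rewrite /pp; ring.
  have E2 : Rpower (N x) (- pp) = N x * Rpower (N x) (- pp - 1).
    rewrite -{2}(Rpower_1 (N x)) // -Rpower_plus; congr Rpower; ring.
  rewrite E1 /gg /Rg E2. ring.
have C := core _ _ Hgg HNR. rewrite -/Q in C.
have EIm : Im = (pp - Q) / 2 * I2 by lra.
set k := (Q - 2 - 2 * alpha) / 2.
exists I1, I2, (1 * (1 * I1 + (2 * k) * Im) + (k ^ 2) * I2).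
split=> //; split=> //; split; last first.
  rewrite EIm /k /pp. clearbody Q. field.
apply: (IntIter_ext n n _ _); last first.
  apply: IntIter_lin; [apply: IntIter_lin; [exact: HI1 | exact: HIm] | exact: HI2].
move=> x /=. case: (classic (x = vzero n)) => [->|Hx].
  case: Z0 => [a [b [c d]]]; rewrite a b c d /Rdiv; ring.
have t0 := NP x Hx.
have EP : Rpower (N x) (alpha + 1) = Rpower (N x) alpha * N x.
  by rewrite Rpower_plus Rpower_1.
have EM : Rpower (N x) (- (2 * alpha + 1)) = / (Rpower (N x) alpha * (Rpower (N x) alpha * N x)).
  rewrite -EP -Rpower_plus -Rpower_Ropp; congr Rpower; ring.
rewrite EM EP /k.
have := Rpower_ne0 (N x) alpha => hA.
have : N x <> 0 by lra. move=> hN.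
rewrite /Rdiv. field. split=> //.
Qed.

End Main.

Lemma smooth_C1 n (f : vec n -> R) : smooth f -> cont_vec f /\
  exists df : 'I_n -> vec n -> R, partials f df /\ forall i, cont_vec (df i).
Proof.
move=> H. case: (H 1%N) => Hc Hd. split=> //.
have H' : forall i, {g' : vec n -> R | (forall x, derivable_pt_lim (fun t => f (upd x i t)) (x i) (g' x))
   /\ Ck n 0 g'}.
  move=> i; apply: constructive_indefinite_description; exact: Hd i.
exists (fun i => proj1_sig (H' i)); split.
  move=> i x; exact: (proj1 (proj2_sig (H' i)) x).
move=> i; exact: (proj2 (proj2_sig (H' i))).
Qed.

(* complex-valued f = u + i v; Rf = Ru + i Rv *)
Theorem theorem2p1 (n : nat) (mul : vec n -> vec n -> vec n) (inv : vec n -> vec n)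
  (nu : 'I_n -> R) (N : vec n -> R)
  (HG : homogeneous_group mul inv nu) (HQ : 3 <= homdim nu)
  (HN : hom_quasi_norm inv nu N)
  (u v Ru Rv : vec n -> R)
  (Hu : Cc_infty_punctured u) (Hv : Cc_infty_punctured v)
  (HRu : radial_deriv nu N u Ru) (HRv : radial_deriv nu N v Rv)
  (alpha : R) :
  let Q := homdim nu in
  exists I1 I2 I3 : R,
    LebInt n (fun x => (Ru x / Rpower (N x) alpha) ^ 2
                     + (Rv x / Rpower (N x) alpha) ^ 2) I1 /\
    LebInt n (fun x => (u x / Rpower (N x) (alpha + 1)) ^ 2
                     + (v x / Rpower (N x) (alpha + 1)) ^ 2) I2 /\
    LebInt n (fun x =>
        (Ru x / Rpower (N x) alpha
           + (Q - 2 - 2 * alpha) / (2 * Rpower (N x) (alpha + 1)) * u x) ^ 2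
      + (Rv x / Rpower (N x) alpha
           + (Q - 2 - 2 * alpha) / (2 * Rpower (N x) (alpha + 1)) * v x) ^ 2) I3 /\
    I1 - ((Q - 2) / 2 - alpha) ^ 2 * I2 = I3.
Proof.
move=> Q.
case: HG => _ [_ [_ [_ [_ [Hnu _]]]]].
case: HN => HNc [HN0 [_ [HNd HNz]]].
case: Hu => Hus [Rbu [ru [Hru [HRbu Hsu]]]].
case: Hv => Hvs [Rbv [rv [Hrv [HRbv Hsv]]]].
case: (smooth_C1 _ u Hus) => Huc [Du [HDu HDuc]].
case: (smooth_C1 _ v Hvs) => Hvc [Dv [HDv HDvc]].
apply: (main_sec n nu N Hnu HNc HN0 HNd HNz u v Ru Rv Du Dv HRu HRv HDu HDv HDuc HDvc Huc Hvc
   (Rmax Rbu Rbv) (Rmin ru rv)).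
- have := Rmax_l Rbu Rbv; lra.
- by apply: Rmin_pos.
- move=> x [i hi]; split; [apply: Hsu | apply: Hsv]; left; exists i.
    have := Rmax_l Rbu Rbv; lra.
  have := Rmax_r Rbu Rbv; lra.
- move=> x hx; split; [apply: Hsu | apply: Hsv]; right => i; have := hx i.
    have := Rmin_l ru rv; lra.
  have := Rmin_r ru rv; lra.
Qed.
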